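(* Let $R''\subseteq R\subseteq S_n$ be the top-$k$ partial rankings $R: a_1\succ\cdots\succ a_l\succ[n]\setminus\{a_1,\dots,a_l\}$ and $R'': a_1\succ\cdots\succ a_l\succ a_{l+1}\succ\cdots\succ a_m\succ[n]\setminus\{a_1,\dots,a_m\}$ with $l\le m$. Then for every $\sigma\in R$, $$d(\sigma,\Pi_{R''}(\sigma))=\big((n-l)-(m-l)\big)(m-l)+\binom{m-l}2-d\big(A_R(\sigma),\Pi_{R''}(A_R(\sigma))\big).$$
   Context: $S_n$ is the symmetric group on $[n]$; $\sigma\in S_n$ is identified with the full ranking $\sigma(1)\succ\cdots\succ\sigma(n)$. For distinct items $x,y$, $\{x,y\}$ is discordant for $\sigma,\tau$ if $(\sigma^{-1}(x)-\sigma^{-1}(y))(\tau^{-1}(x)-\tau^{-1}(y))<0$. The Kendall distance $d(\sigma,\tau)$ is the number of unordered discordant pairs. For $0\le k\le n$ and distinct $c_1,\dots,c_k\in[n]$, the top-$k$ partial ranking $Q$: $c_1\succ\cdots\succ c_k\succ[n]\setminus\{c_1,\dots,c_k\}$ is the set $\{\sigma\in S_n:\sigma(i)=c_i,\ i\le k\}$; its antithetic operator $A_Q:Q\to Q$ is $A_Q(\sigma)(i)=c_i$ for $i\le k$ and $A_Q(\sigma)(k+j)=\sigma(n+1-j)$ for $j=1,\dots,n-k$. For $\tau\in S_n$, $\Pi_Q(\tau)$ denotes the unique element of $Q$ minimising $\rho\mapsto d(\rho,\tau)$ over $\rho\in Q$. *)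

(* Defs.v *)
(* Rankings are permutations of 'I_n: sigma maps a
   position (0-indexed) to the item placed at that position. *)
From HB Require Import structures.
From mathcomp Require Import all_boot all_order all_algebra all_fingroup.
From Stdlib Require Import Lia.
Set Implicit Arguments. Unset Strict Implicit. Unset Printing Implicit Defensive.

Definition discordant n (s t : 'S_n) (x y : 'I_n) : bool :=
  ((s^-1)%g x < (s^-1)%g y)%N != ((t^-1)%g x < (t^-1)%g y)%N.

Definition kendall n (s t : 'S_n) : nat :=
  #|[set p : 'I_n * 'I_n | (p.1 < p.2)%N && discordant s t p.1 p.2]|.

(* top-k partial ranking c_1 > ... > c_k > rest, with c = [:: c_1; ...; c_k] *)
Definition topk n (c : seq 'I_n) : {set 'S_n} :=
  [set s : 'S_n | [forall i : 'I_n, (i < size c)%N ==> (s i == nth i c i)]].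

(* position map for the antithetic operator (0-indexed):
   p < k is fixed, p >= k maps to n-1+k-p (reversal of the tail) *)
Definition anti_pos n (k : nat) (p : 'I_n) : 'I_n :=
  if (p < k)%N then p else insubd p (n.-1 + k - p)%N.

Lemma anti_pos_val n k (p : 'I_n) : k <= n ->
  val (anti_pos k p) = if (p < k)%N then val p else (n.-1 + k - p)%N.
Proof.
move=> kn; rewrite /anti_pos; case: ltnP => //= pk.
rewrite val_insubd; case: ifP => // /negbT; rewrite -leqNgt.
have pn := ltn_ord p; move: pk pn kn.
move=> /leP + /ltP + /leP + /leP; rewrite -?minusE -?plusE; lia.
Qed.

Lemma anti_pos_inj n k : k <= n -> injective (@anti_pos n k).
Proof.
move=> kn p q /(congr1 val); rewrite !anti_pos_val // => E; apply/val_inj.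
have pn := ltn_ord p; have qn := ltn_ord q.
move: E; case: (ltnP p k) => pk; case: (ltnP q k) => qk /= E.
all: move: pk qk pn qn kn E => /leP + /leP + /ltP + /ltP + /leP +; rewrite -?minusE -?plusE; lia.
Qed.

Definition anti_perm n (k : nat) : 'S_n :=
  if (k <= n)%N =P true is ReflectT h then perm (anti_pos_inj h) else 1%g.

(* antithetic operator A_Q for Q = topk c: A_Q(sigma)(p) = sigma(anti_pos p),
   which on Q equals c_p for p < k and sigma(n+1-j) at position k+j (1-indexed) *)
Definition antithetic n (c : seq 'I_n) (s : 'S_n) : 'S_n :=
  (anti_perm n (size c) * s)%g.

Definition proj n (c : seq 'I_n) (t : 'S_n) : 'S_n :=
  [arg min_(r < 1%g in topk c) kendall r t].

(* Main.v *)
Require Import Defs.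
From HB Require Import structures.
From mathcomp Require Import all_boot all_order all_algebra all_fingroup.
From mathcomp Require Import zify.
Set Implicit Arguments. Unset Strict Implicit. Unset Printing Implicit Defensive.

Definition pos n (t : 'S_n) (x : 'I_n) : nat := (t^-1)%g x.

Lemma size_le n (a : seq 'I_n) : uniq a -> size a <= n.
Proof. move/card_uniqP=> <-; have := max_card (mem a); by rewrite card_ord. Qed.

Lemma topk_inv n (c : seq 'I_n) (r : 'S_n) x :
  uniq c -> r \in topk c -> x \in c -> pos r x = index x c.
Proof.
move=> uc; rewrite inE => /forallP H xc.
have il : index x c < n by apply: leq_trans (size_le uc); rewrite index_mem.
have := H (Ordinal il); rewrite /= index_mem xc /= => /eqP E.
rewrite nth_index // in E.
by rewrite /pos -{1}E permK.
Qed.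

Lemma topk_notin n (c : seq 'I_n) (r : 'S_n) x :
  r \in topk c -> x \notin c -> size c <= pos r x.
Proof.
rewrite inE => /forallP H xc; rewrite leqNgt; apply/negP => lt.
have := H ((r^-1)%g x); rewrite lt /= permKV => /eqP E.
by move: xc; rewrite E mem_nth.
Qed.

Definition key0 n (a : seq 'I_n) (x : 'I_n) := if x \in a then index x a else size a.

Lemma cons_order n (a : seq 'I_n) (r : 'S_n) x y :
  uniq a -> r \in topk a -> (x \in a) || (y \in a) ->
  (pos r x < pos r y) = (key0 a x < key0 a y).
Proof.
move=> ua ra; rewrite /key0.
have F z : if z \in a then pos r z = index z a /\ index z a < size a
           else size a <= pos r z.
  case: ifP => za; last by apply: topk_notin => //; rewrite za.
  by rewrite (topk_inv ua ra za) index_mem.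
have Fx := F x; have Fy := F y.
case xa: (x \in a) Fx; case ya: (y \in a) Fy => //= Fy Fx _.
- by case: Fx => -> _; case: Fy => -> _.
- case: Fx => -> Fx. apply/idP/idP; lia.
- case: Fy => -> Fy. apply/idP/idP; lia.
Qed.

Lemma discE n (s t : 'S_n) x y :
  discordant s t x y = ((pos s x < pos s y) != (pos t x < pos t y)).
Proof. by []. Qed.

Lemma kendall_sym n (s t : 'S_n) : kendall s t = kendall t s.
Proof. by apply: eq_card => p; rewrite !inE !discE eq_sym. Qed.

Definition D n (a : seq 'I_n) (t : 'S_n) :=
  #|[set p : 'I_n * 'I_n | [&& (p.1 < p.2)%N, (p.1 \in a) || (p.2 \in a) &
      (key0 a p.1 < key0 a p.2) != (pos t p.1 < pos t p.2)]]|.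

Lemma lowerD n (a : seq 'I_n) (r t : 'S_n) :
  uniq a -> r \in topk a -> D a t <= kendall r t.
Proof.
move=> ua ra; apply: subset_leq_card; apply/subsetP => p; rewrite !inE.
case/and3P=> -> c; rewrite discE (cons_order ua ra c) //.
Qed.

Definition key n (a : seq 'I_n) (t : 'S_n) (x : 'I_n) :=
  if x \in a then index x a else size a + pos t x.

Lemma key_inj n (a : seq 'I_n) t : injective (key a t).
Proof.
move=> x y; rewrite /key.
case xa: (x \in a); case ya: (y \in a).
- by apply: index_inj; rewrite ?xa ?ya.
- by move=> E; move: xa; rewrite -index_mem E ltnNge leq_addr.
- by move=> E; move: ya; rewrite -index_mem -E ltnNge leq_addr.
- move/addnI => /val_inj E; exact: (perm_inj E).
Qed.

Definition rank n (a : seq 'I_n) (t : 'S_n) (x : 'I_n) :=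
  #|[set y | key a t y < key a t x]|.

Lemma rank_lt n (a : seq 'I_n) t x : rank a t x < n.
Proof.
rewrite /rank; apply: (@leq_trans #|[set: 'I_n]|); last by rewrite cardsT card_ord.
apply: proper_card; apply/properP.
split; first exact: subsetT.
by exists x; rewrite !inE ?ltnn.
Qed.

Lemma rank_mono n (a : seq 'I_n) t x y :
  key a t x < key a t y -> rank a t x < rank a t y.
Proof.
move=> lt; apply: proper_card; apply/properP; split.
  by apply/subsetP => z; rewrite !inE => /ltn_trans; apply.
by exists x; rewrite !inE ?ltnn.
Qed.

Lemma rank_ltE n (a : seq 'I_n) t x y :
  (rank a t x < rank a t y) = (key a t x < key a t y).
Proof.
case: (ltngtP (key a t x) (key a t y)) => h.
- exact: rank_mono.
- by apply/negbTE; rewrite -leqNgt ltnW // rank_mono.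
- by rewrite (key_inj h) ltnn.
Qed.

Definition rk n (a : seq 'I_n) t (x : 'I_n) : 'I_n := Ordinal (rank_lt a t x).

Lemma rk_inj n (a : seq 'I_n) t : injective (rk a t).
Proof.
move=> x y /(congr1 val) /= E; apply: (key_inj (a:=a) (t:=t)).
case: (ltngtP (key a t x) (key a t y)) => // h.
- by move: (rank_mono h); rewrite E ltnn.
- by move: (rank_mono h); rewrite E ltnn.
Qed.

Definition r0 n (a : seq 'I_n) t : 'S_n := ((perm (@rk_inj n a t))^-1)%g.

Lemma pos_r0 n (a : seq 'I_n) t x : pos (r0 a t) x = rank a t x.
Proof. by rewrite /pos /r0 invgK permE. Qed.

Lemma r0_topk n (a : seq 'I_n) t : uniq a -> r0 a t \in topk a.
Proof.
move=> ua; rewrite inE; apply/forallP => i; apply/implyP => ia.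
set z := nth i a i.
have za : z \in a by rewrite mem_nth.
have kz : key a t z = i by rewrite /key za index_uniq.
have rz : rank a t z = i.
  rewrite /rank kz.
  have -> : #|[set y | key a t y < i]| = #|take i a|.
    apply: eq_card => y; rewrite !inE /key.
    case ya: (y \in a); first by rewrite in_take.
    have -> : (y \in take i a) = false by apply: contraFF ya; exact: mem_take.
    by apply/negbTE; rewrite -leqNgt (leq_trans (ltnW ia)) // leq_addr.
  by rewrite (card_uniqP (take_uniq i ua)) size_takel // ltnW.
have -> : i = perm (@rk_inj n a t) z by apply/val_inj; rewrite permE /= rz.
by rewrite /r0 permK.
Qed.

Lemma key_key0 n (a : seq 'I_n) t x y : (x \in a) || (y \in a) ->
  (key a t x < key a t y) = (key0 a x < key0 a y).
Proof.
rewrite /key /key0; have := index_mem x a; have := index_mem y a.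
case: (x \in a); case: (y \in a) => //= hy hx _; apply/idP/idP; lia.
Qed.

Lemma kendall_r0 n (a : seq 'I_n) t : kendall (r0 a t) t = D a t.
Proof.
apply: eq_card => p; rewrite !inE discE !pos_r0 rank_ltE.
case c: ((p.1 \in a) || (p.2 \in a)); first by rewrite key_key0.
move: c; rewrite /key; case: (p.1 \in a); case: (p.2 \in a) => //= _.
by rewrite ltn_add2l eqxx andbF.
Qed.

Lemma kendall_proj n (a : seq 'I_n) t : uniq a -> kendall t (proj a t) = D a t.
Proof.
move=> ua; rewrite kendall_sym /proj /arg_min /extremum.
case: pickP => [r /andP [rT /forallP H] | no].
  apply/eqP; rewrite eqn_leq lowerD // andbT.
  have := H (r0 a t); rewrite r0_topk //= kendall_r0; exact.
have := no (r0 a t); rewrite /= r0_topk //=.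
move/negbT/negP; case; apply/forallP => j; apply/implyP => jT.
by rewrite kendall_r0 lowerD.
Qed.

Lemma anti_permE n k p : k <= n -> anti_perm n k p = anti_pos k p.
Proof. by move=> kn; rewrite /anti_perm; case: eqP => // h; rewrite permE. Qed.

Lemma anti_invol n k (p : 'I_n) : k <= n -> anti_pos k (anti_pos k p) = p.
Proof.
move=> kn; apply/val_inj; rewrite anti_pos_val //.
have E : nat_of_ord (anti_pos k p) = if p < k then nat_of_ord p else (n.-1 + k - p)%N := anti_pos_val p kn.
rewrite !E !(anti_pos_val p kn) -[val p]/(nat_of_ord p); have := ltn_ord p; repeat case: ifP; lia.
Qed.

Lemma pos_anti n (c : seq 'I_n) (s : 'S_n) x : size c <= n ->
  pos (antithetic c s) x =
  if pos s x < size c then pos s x else (n.-1 + size c - pos s x)%N.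
Proof.
move=> cn; rewrite /pos -(anti_pos_val ((s^-1)%g x) cn); congr val.
apply: (@perm_inj _ (antithetic c s)); rewrite permKV /antithetic permM.
by rewrite anti_permE // anti_invol // permKV.
Qed.

Definition goodfg n (c : seq 'I_n) l (f g : 'I_n -> nat) :=
  forall z, if z \in c then f z = g z /\ g z < l else l <= f z /\ l <= g z.

Lemma base1 n (c : seq 'I_n) l f g x y : goodfg c l f g ->
  (x \in c) || (y \in c) -> (f x < f y) = (g x < g y).
Proof.
move=> G; have Gx := G x; have Gy := G y.
case: (x \in c) Gx; case: (y \in c) Gy => //= Gy Gx _.
- by case: Gx => -> _; case: Gy => -> _.
- case: Gx => -> ?; case: Gy => ??; apply/idP/idP; lia.
- case: Gy => -> ?; case: Gx => ??; apply/idP/idP; lia.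
Qed.

Lemma good_s n (a : seq 'I_n) l (s : 'S_n) : uniq a -> l <= size a ->
  s \in topk (take l a) -> goodfg (take l a) l (key0 a) (pos s).
Proof.
move=> ua la st z; have ut := take_uniq l ua.
have sz : size (take l a) = l by rewrite size_takel.
case: ifP => zt.
  rewrite (topk_inv ut st zt) /key0 (mem_take zt).
  rewrite -{1}(cat_take_drop l a) index_cat zt; split => //.
  by rewrite -[X in _ < X]sz index_mem.
split; last by rewrite -{1}sz; apply: topk_notin; rewrite ?zt.
rewrite /key0; case: ifP => // za.
by rewrite -{1}(cat_take_drop l a) index_cat zt sz leq_addr.
Qed.

Lemma good_u n (a : seq 'I_n) l (s : 'S_n) : uniq a -> l <= size a ->
  s \in topk (take l a) ->
  goodfg (take l a) l (key0 a) (pos (antithetic (take l a) s)).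
Proof.
move=> ua la st z; have G := good_s ua la st z.
have sz : size (take l a) = l by rewrite size_takel.
have ln : l <= n by rewrite (leq_trans la) // size_le.
rewrite pos_anti sz ?ln //; have := ltn_ord ((s^-1)%g z); rewrite -/(pos s z).
case: (z \in take l a) G => [[-> h] | [h1 h2]] pn; first by rewrite h.
rewrite ltnNge h2 /=; split => //; lia.
Qed.

Definition B2 n (a : seq 'I_n) l :=
  [set p : 'I_n * 'I_n | [&& (p.1 < p.2)%N, (p.1 \in a) || (p.2 \in a),
     p.1 \notin take l a & p.2 \notin take l a]].

Lemma sumD n (a : seq 'I_n) l (s : 'S_n) : uniq a -> l <= size a ->
  s \in topk (take l a) ->
  D a s + D a (antithetic (take l a) s) = #|B2 a l|.
Proof.
move=> ua la st.
set u := antithetic (take l a) s.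
have Gs := good_s ua la st; have Gu := good_u ua la st.
have sz : size (take l a) = l by rewrite size_takel.
have ln : l <= n by rewrite (leq_trans la) // size_le.
set X := [set p : 'I_n * 'I_n | (key0 a p.1 < key0 a p.2) != (pos s p.1 < pos s p.2)].
rewrite -(cardsID X (B2 a l)); congr (_ + _); apply: eq_card => p; rewrite !inE.
- case c1: ((p.1 \in take l a) || (p.2 \in take l a)).
    by rewrite (base1 Gs c1) eqxx !andbF; case: (p.1 \in take l a) c1 => //=; rewrite andbF.
  move: c1; case: (p.1 \in take l a); case: (p.2 \in take l a) => //= _.
  by case: (p.1 < p.2)%N; case: ((p.1 \in a) || (p.2 \in a)).
- case c1: ((p.1 \in take l a) || (p.2 \in take l a)).
    rewrite /u (base1 Gu c1) eqxx !andbF; move: c1; case: (p.1 \in take l a); case: (p.2 \in take l a) => //= _; by rewrite ?andbF.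
  move: c1; case E1 : (p.1 \in take l a); case E2: (p.2 \in take l a) => //= _.
  rewrite !andbT andbC; case lt12: (p.1 < p.2)%N; rewrite ?andbF ?andbT //.
  rewrite /u !pos_anti sz //.
  have := Gs p.1; have := Gs p.2; rewrite E1 E2 => -[_ h2] [_ h1].
  have ne : pos s p.1 != pos s p.2.
    apply/negP => /eqP /val_inj /perm_inj E; by move: lt12; rewrite E ltnn.
  have := ltn_ord ((s^-1)%g p.1); have := ltn_ord ((s^-1)%g p.2).
  rewrite -/(pos s p.1) -/(pos s p.2) => q2 q1.
  have n1 : (pos s p.1 < l) = false by rewrite ltnNge h1.
  have n2 : (pos s p.2 < l) = false by rewrite ltnNge h2.
  rewrite n1 n2.
  have -> : (n.-1 + l - pos s p.1 < n.-1 + l - pos s p.2) = ~~ (pos s p.1 < pos s p.2).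
    move: ne; rewrite neq_ltn; case/orP => h; apply/idP/idP; lia.
  by case: ((p.1 \in a) || (p.2 \in a)); case: (key0 a p.1 < key0 a p.2); case: (pos s p.1 < pos s p.2); rewrite ?E1 ?E2 ?lt12.
Qed.

Definition PP n (X : {set 'I_n}) :=
  #|[set p : 'I_n * 'I_n | [&& (p.1 < p.2)%N, p.1 \in X & p.2 \in X]]|.

Lemma PP_count n (X : {set 'I_n}) : 2 * PP X + #|X| = #|X| * #|X|.
Proof.
rewrite -cardsX.
set L := [set p : 'I_n * 'I_n | (p.1 < p.2)%N].
set G := [set p : 'I_n * 'I_n | (p.2 < p.1)%N].
rewrite -(cardsID L) -(cardsID G (setX X X :\: L)).
have E1 : #|setX X X :&: L| = PP X.
  by apply: eq_card => p; rewrite !inE andbC andbA.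
have E2 : #|(setX X X :\: L) :&: G| = PP X.
  rewrite /PP -(card_imset _ (@inv_inj _ (fun p : 'I_n * 'I_n => (p.2, p.1)) _)); last by case.
  apply: eq_card => p; rewrite !inE; apply/idP/imsetP.
    case/andP=> /andP [] /negbTE h /andP [h1 h2] h3; exists (p.2, p.1); last by case: p {h h1 h2 h3}.
    by rewrite !inE h3 h1 h2.
  case=> q; rewrite !inE => /and3P [h1 h2 h3] ->; rewrite /= h1 h2 h3 andbT /=.
  by rewrite ltnNge ltnW.
have E3 : #|(setX X X :\: L) :\: G| = #|X|.
  rewrite -(card_imset _ (f := fun x : 'I_n => (x, x))); last by move=> x y [].
  apply: eq_card => p; rewrite !inE; apply/idP/imsetP.
    case/andP => h1 /andP [h2 /andP [h3 h4]]; exists p.1 => //.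
    case: p h1 h2 h3 h4 => x y /= h1 h2 h3 h4; congr pair.
    by apply/val_inj/eqP; rewrite eqn_leq leqNgt h2 leqNgt h1.
  by case=> x xX ->; rewrite /= ltnn xX.
rewrite E1 E2 E3; lia.
Qed.

Lemma B2_count n (a : seq 'I_n) l :
  #|B2 a l| + PP [set z | z \notin a] = PP [set z | z \notin take l a].
Proof.
apply/esym; rewrite /PP -(cardsID [set p : 'I_n * 'I_n | (p.1 \notin a) && (p.2 \notin a)]) addnC.
congr (_ + _); apply: eq_card => p; rewrite !inE.
- case: (boolP (p.1 \in a)) => h1; case: (boolP (p.2 \in a)) => h2 //=.
  by rewrite andbF.
- case: (boolP (p.1 \in a)) => h1; case: (boolP (p.2 \in a)) => h2; rewrite ?andbF //=.
  have t1 : p.1 \notin take l a by apply: contraNN h1; apply: mem_take.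
  have t2 : p.2 \notin take l a by apply: contraNN h2; apply: mem_take.
  by rewrite t1 t2 !andbT.
Qed.

Lemma card_notin n (c : seq 'I_n) : uniq c -> #|[set z | z \notin c]| = n - size c.
Proof.
move=> uc; have := cardsC [set z in c]; rewrite card_ord cardsE (card_uniqP uc).
move=> E; have -> : #|[set z | z \notin c]| = #|~: [set z in c]| by apply: eq_card => z; rewrite !inE.
apply: (@addnI (size c)); rewrite E subnKC //; exact: size_le.
Qed.


Lemma bin2E d : 2 * 'C(d, 2) + d = d * d.
Proof.
elim: d => // d IH; rewrite binS bin1; nia.
Qed.

Unset Implicit Arguments.
Import GRing.Theory.
Local Open Scope ring_scope.

Theorem lemma8 (n : nat) (a : seq 'I_n) (l : nat) (s : 'S_n) :
  uniq a -> (l <= size a)%N -> s \in topk (take l a) ->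
  (kendall s (proj a s))%:Z =
    ((n%:Z - l%:Z) - ((size a)%:Z - l%:Z)) * ((size a)%:Z - l%:Z)
    + ('C(size a - l, 2))%:Z
    - (kendall (antithetic (take l a) s) (proj a (antithetic (take l a) s)))%:Z.
Proof.
move=> ua la st.
rewrite !kendall_proj //.
have S := sumD ua la st.
have B := B2_count a l.
have P1 := PP_count [set z | z \notin a].
have P2 := PP_count [set z | z \notin take l a].
rewrite !card_notin ?take_uniq // size_takel // in P1 P2.
have mn := size_le ua.
have C := bin2E (size a - l).
move: S B P1 P2 C mn la.
set Ds := D a s; set Du := D a _; set b := #|B2 a l|.
set p1 := PP _; set p2 := PP _; set m := size a; set c := 'C(_, _).
move=> S B P1 P2 C mn la.
have key : (Ds + Du = (n - m) * (m - l) + c)%N.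
  clear -S B P1 P2 C mn la; nia.
have e1 : n%:Z - l%:Z - (m%:Z - l%:Z) = (n - m)%N%:Z.
  by rewrite opprB addrA subrK subzn.
rewrite e1 (subzn la) -PoszM -PoszD.
by apply/eqP; rewrite eq_sym subr_eq -PoszD -key.
Qed.
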